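(* Let $\mathcal A$ be a finite nonempty alphabet, let $\omega\in\mathcal A^{\mathbb N}$ be uniformly recurrent, and let $u\in\mathcal A^+$ be a nonempty finite word. Then $\omega|_u$ is an IP-set if and only if $\omega|_u$ is a central set.
   Context: $\mathbb N=\{0,1,2,\dots\}$. For $\omega=\omega_0\omega_1\omega_2\cdots\in\mathcal A^{\mathbb N}$ and a nonempty finite word $u$, $\omega|_u=\{n\in\mathbb N : \omega_n\omega_{n+1}\cdots\omega_{n+|u|-1}=u\}$ (the set of occurrences of $u$). $\omega$ is uniformly recurrent if for every factor $u$ of $\omega$ the set $\omega|_u$ has bounded gaps. A set $A\subseteq\mathbb N$ is an IP-set if there is a sequence $x_0<x_1<x_2<\cdots$ of natural numbers with $\sum_{n\in F}x_n\in A$ for every nonempty finite $F\subseteq\mathbb N$. $\beta\mathbb N$ is the set of ultrafilters on $\mathbb N$ with addition defined by $A\in p+q$ iff $\{n\in\mathbb N: A-n\in p\}\in q$, where $A-n=\{m: m+n\in A\}$; this makes $\beta\mathbb N$ a compact left-topological semigroup with a smallest two-sided ideal $K(\beta\mathbb N)$. An idempotent is a non-principal ultrafilter $p$ with $p+p=p$; a minimal idempotent is an idempotent lying in $K(\beta\mathbb N)$. A set $A\subseteq\mathbb N$ is central if it belongs to some minimal idempotent. *)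

(* Defs.v *)
From mathcomp Require Import all_boot.
Set Implicit Arguments.
Unset Strict Implicit.
Unset Printing Implicit Defensive.

Definition natset := nat -> Prop.

Definition occ (A : Type) (omega : nat -> A) (u : seq A) : natset :=
  fun n => forall i, i < size u -> omega (n + i) = nth (omega 0) u i.

Definition factor (A : Type) (omega : nat -> A) (u : seq A) : Prop :=
  exists n, occ omega u n.

Definition bounded_gaps (S : natset) : Prop :=
  exists L, forall m, exists n, m <= n < m + L /\ S n.

Definition uniformly_recurrent (A : Type) (omega : nat -> A) : Prop :=
  forall u : seq A, factor omega u -> bounded_gaps (occ omega u).

(* IP-set: strictly increasing x with all finite nonempty sums in S.
   Finite nonempty F subset N is represented by a duplicate-free nonempty seq. *)
Definition IP_set (S : natset) : Prop :=
  exists x : nat -> nat, (forall n, x n < x n.+1) /\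
    forall F : seq nat, uniq F -> F <> [::] -> S (\sum_(i <- F) x i).

Record ultrafilter (p : natset -> Prop) : Prop := {
  uf_proper : ~ p (fun _ => False);
  uf_up : forall X Y : natset, p X -> (forall n, X n -> Y n) -> p Y;
  uf_inter : forall X Y : natset, p X -> p Y -> p (fun n => X n /\ Y n);
  uf_ultra : forall X : natset, p X \/ p (fun n => ~ X n)
}.

Definition nonprincipal (p : natset -> Prop) : Prop :=
  forall k, ~ p (fun n => n = k).

Definition shift (X : natset) (n : nat) : natset := fun m => X (m + n).

Definition uf_add (p q : natset -> Prop) : natset -> Prop :=
  fun X => q (fun n => p (shift X n)).

Definition uf_eq (p q : natset -> Prop) : Prop := forall X, p X <-> q X.

Definition two_sided_ideal (I : (natset -> Prop) -> Prop) : Prop :=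
  (exists p, ultrafilter p /\ I p) /\
  (forall p, I p -> ultrafilter p) /\
  (forall p q, I p -> ultrafilter q -> I (uf_add p q) /\ I (uf_add q p)).

(* Membership in the smallest two-sided ideal K(beta N): belonging to every
   two-sided ideal (this intersection is K(beta N), which exists). *)
Definition in_K (p : natset -> Prop) : Prop :=
  ultrafilter p /\ forall I, two_sided_ideal I -> I p.

Definition idempotent (p : natset -> Prop) : Prop :=
  ultrafilter p /\ nonprincipal p /\ uf_eq (uf_add p p) p.

Definition minimal_idempotent (p : natset -> Prop) : Prop :=
  idempotent p /\ in_K p.

Definition central (S : natset) : Prop :=
  exists p, minimal_idempotent p /\ p S.

(* Main.v *)
Require Import Defs.
From mathcomp Require Import all_boot.
From mathcomp Require classical_sets filter.
From mathcomp Require Import zify.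
From Stdlib Require Import FunctionalExtensionality PropExtensionality ClassicalEpsilon Classical.

Set Implicit Arguments.
Unset Strict Implicit.
Unset Printing Implicit Defensive.

Definition UF := natset -> Prop.

Section Basic.
Variable p : UF.
Hypothesis up : ultrafilter p.

Lemma uf_ex X : p X -> exists n, X n.
Proof.
move=> pX; apply: NNPP => H; apply: (uf_proper up).
apply: (uf_up up pX) => n Xn; apply: H; by exists n.
Qed.

Lemma ufT : p (fun _ => True).
Proof.
case: (uf_ultra up (fun _ => False)) => H; first by case: (uf_proper up).
by apply: (uf_up up H).
Qed.

Lemma uf_notE X : p (fun n => ~ X n) <-> ~ p X.
Proof.
split.
  move=> H1 H2; apply: (uf_proper up).
  apply: (uf_up up (uf_inter up H1 H2)) => n [] //.
by case: (uf_ultra up X).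
Qed.

Lemma uf_upE X Y : (forall n, X n <-> Y n) -> p X <-> p Y.
Proof. by move=> H; split=> h; apply: (uf_up up h) => n /H. Qed.

Lemma uf_finI (P : nat -> natset) k :
  p (fun n => forall i, i < k -> P i n) <-> forall i, i < k -> p (P i).
Proof.
elim: k => [|k IH].
  split=> // _; apply: (uf_up up ufT) => n _ i //.
split.
  move=> H i ik; case: (ltngtP i k) => [lik|//|->].
  - apply: (proj1 IH _ i lik); apply: (uf_up up H) => n Hn j jk; apply: Hn; exact: ltnW.
  - by move: ik; rewrite ltnS leqNgt => /negP.
  - by apply: (uf_up up H) => n; apply.
move=> H.
have H1 : p (fun n => forall i, i < k -> P i n) by apply/(proj2 IH) => i ik; apply: H; exact: ltnW.
apply: (uf_up up (uf_inter up H1 (H k (ltnSn k)))) => n [h1 h2] i.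
rewrite ltnS leq_eqVlt => /orP[/eqP->//|]; exact: h1.
Qed.

End Basic.

Lemma uf_ext p q : ultrafilter p -> ultrafilter q -> (forall X, p X -> q X) -> p = q.
Proof.
move=> up uq H; apply: functional_extensionality => X.
apply: propositional_extensionality; split; first exact: H.
move=> qX; apply: NNPP => npX; move/(uf_notE up): npX => /H.
by move/(uf_notE uq).
Qed.

Lemma uf_add_uf p q : ultrafilter p -> ultrafilter q -> ultrafilter (uf_add p q).
Proof.
move=> up uq; split; rewrite /uf_add.
- move=> H; apply: (uf_proper uq); apply: (uf_up uq H) => n; rewrite /shift.
  move/(uf_ex up) => [] //.
- move=> X Y H XY; apply: (uf_up uq H) => n; rewrite /shift => h.
  apply: (uf_up up h) => m; exact: XY.
- move=> X Y HX HY; apply: (uf_up uq (uf_inter uq HX HY)) => n [h1 h2].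
  exact: (uf_inter up h1 h2).
- move=> X; case: (uf_ultra uq (fun n => p (shift X n))) => H; [left|right] => //.
  apply: (uf_up uq H) => n; rewrite /shift => h; exact/(uf_notE up).
Qed.

Lemma uf_assoc a b c : ultrafilter a -> ultrafilter b -> ultrafilter c ->
  uf_add (uf_add a b) c = uf_add a (uf_add b c).
Proof.
move=> ua ub uc; apply: uf_ext; try by repeat apply: uf_add_uf.
move=> X; rewrite /uf_add => H; apply: (uf_up uc H) => n h.
apply: (uf_up ub h) => m; rewrite /shift => h'.
by apply: (uf_up ua h') => k; rewrite addnA.
Qed.

Section Act.
Variable (A : finType).

Definition act (p : UF) (x : nat -> A) : nat -> A :=
  fun i => epsilon (inhabits (x 0)) (fun c => p (fun n => x (n + i) = c)).

Lemma uf_letter p (x : nat -> A) i : ultrafilter p -> exists c, p (fun n => x (n + i) = c).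
Proof.
move=> up; apply: NNPP => H.
have Hs : forall s : seq A, p (fun n => x (n + i) \notin s).
  elim=> [|c s IH]; first by apply: (uf_up up (ufT up)).
  have Hc : p (fun n => ~ (x (n + i) = c)).
    apply/(uf_notE up) => hc; apply: H; by exists c.
  apply: (uf_up up (uf_inter up IH Hc)) => n [h1 h2].
  by rewrite in_cons negb_or h1 andbT; apply/eqP.
have := Hs (enum A) => /(uf_ex up) [n]; by rewrite mem_enum.
Qed.

Lemma actP p x i : ultrafilter p -> p (fun n => x (n + i) = act p x i).
Proof.
move=> up; rewrite /act; exact: (epsilon_spec (inhabits (x 0)) _ (uf_letter x i up)).
Qed.

Lemma actE p x i c : ultrafilter p -> act p x i = c <-> p (fun n => x (n + i) = c).
Proof.
move=> up; split; first by move=> <-; exact: actP.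
move=> H; have := uf_inter up H (actP x i up) => /(uf_ex up) [n [-> //]].
Qed.

Lemma act_add p q x : ultrafilter p -> ultrafilter q ->
  act (uf_add p q) x = act q (act p x).
Proof.
move=> up uq; apply: functional_extensionality => i.
apply: (proj2 (actE x i (act q (act p x) i) (uf_add_uf up uq))).
rewrite /uf_add; apply: (uf_up uq (actP (act p x) i uq)) => n /(actE _ _ _ up) h.
by apply: (uf_up up h) => m; rewrite /shift addnA.
Qed.

Lemma occ_uf p x (u : seq A) : ultrafilter p ->
  p (occ x u) <-> forall i, i < size u -> act p x i = nth (x 0) u i.
Proof.
move=> up; rewrite /occ.
rewrite (uf_finI up (fun i n => x (n + i) = nth (x 0) u i)).
split=> H i /H; by move/(actE _ _ _ up).
Qed.

Lemma act_window p x m k : ultrafilter p ->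
  exists n, forall j, j < k -> act p x (m + j) = x (n + j).
Proof.
move=> up.
have := proj2 (uf_finI up (fun j n => x (n + (m + j)) = act p x (m + j)) k)
  (fun j _ => actP x (m + j) up) => /(uf_ex up) [n Hn].
exists (n + m) => j jk; by rewrite -addnA Hn.
Qed.

End Act.

Lemma uf_listI p (l : seq natset) : ultrafilter p ->
  (forall X, List.In X l -> p X) -> p (fun n => forall X, List.In X l -> X n).
Proof.
move=> up; elim: l => [|Y l IH] H.
  by apply: (uf_up up (ufT up)) => n _ X [].
have h1 := IH (fun X hX => H X (or_intror hX)).
have h2 := H Y (or_introl erefl).
by apply: (uf_up up (uf_inter up h1 h2)) => n [a b] X [<-|/a].
Qed.

Lemma uf_exists (G : natset -> Prop) :
  (forall l : seq natset, (forall X, List.In X l -> G X) ->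
     exists n, forall X, List.In X l -> X n) ->
  exists p, ultrafilter p /\ forall X, G X -> p X.
Proof.
move=> HG.
pose F := fun Y : natset => exists l : seq natset, (forall X, List.In X l -> G X) /\
  forall n, (forall X, List.In X l -> X n) -> Y n.
have FF : filter.ProperFilter F.
  split.
    move=> [l [lG ln]]; have [n hn] := HG l lG; exact: (ln n hn).
  split.
  - by exists [::]; split => // n.
  - move=> Y Z [l1 [h1 h1']] [l2 [h2 h2']]; exists (l1 ++ l2); split.
      by move=> X /List.in_app_iff [/h1|/h2].
    move=> n hn; split; [apply: h1' | apply: h2'] => X hX; apply: hn;
      apply/List.in_app_iff; by [left|right].
  - move=> Y Z YZ [l [h h']]; exists l; split => // n /h'; exact: YZ.
have [G' [UG FG]] := filter.ultraFilterLemma FF.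
exists G'; split.
  split.
  - move=> H; apply: (@filter.filter_not_empty _ G' _).
    apply: (filter.filterS _ H) => n [].
  - move=> X Y H XY; apply: (filter.filterS _ H) => n; exact: XY.
  - move=> X Y hX hY; exact: (filter.filterI hX hY).
  - move=> X; exact: (filter.in_ultra_setVsetC X UG).
move=> X GX; apply: FG; exists [:: X]; split.
  by move=> Y [<-|[]].
by move=> n /(_ X (or_introl erefl)).
Qed.

Definition closed (S : UF -> Prop) :=
  forall a, ultrafilter a -> (forall X, a X -> exists s, S s /\ s X) -> S a.
Definition ufset (S : UF -> Prop) := forall s, S s -> ultrafilter s.

Lemma compactness (S : UF -> Prop) (Y : natset -> Prop) :
  closed S -> ufset S ->
  (forall l : seq natset, (forall X, List.In X l -> Y X) ->
     exists s, S s /\ forall X, List.In X l -> s X) ->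
  exists s, S s /\ forall X, Y X -> s X.
Proof.
move=> cS uS HY.
pose G := fun Z => Y Z \/ (forall s, S s -> s Z).
have [a [ua aG]] : exists p, ultrafilter p /\ forall X, G X -> p X.
  apply: uf_exists => l lG.
  have [l' [l'Y Hl']] : exists l', (forall X, List.In X l' -> Y X) /\
     forall s, S s -> (forall X, List.In X l' -> s X) -> forall X, List.In X l -> s X.
    elim: l lG => [|Z l IH] lG.
      by exists [::]; split => // s _ _ X [].
    have [l' [h1 h2]] := IH (fun X hX => lG X (or_intror hX)).
    case: (lG Z (or_introl erefl)) => [YZ|allZ].
      exists (Z :: l'); split; first by move=> X [<-|/h1].
      move=> s Ss hs X [<-|hX]; first exact: hs (or_introl erefl).
      apply: (h2 s Ss _ X hX) => X' hX'; apply: hs; by right.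
    exists l'; split => // s Ss hs X [<-|hX]; first exact: allZ.
    exact: h2.
  have [s [Ss hs]] := HY l' l'Y.
  have := uf_listI (uS s Ss) (Hl' s Ss hs) => /(uf_ex (uS s Ss)) [n hn].
  by exists n.
exists a; split; last by move=> X YX; apply: aG; left.
apply: cS => // X aX; apply: NNPP => H.
have : a (fun n => ~ X n).
  apply: aG; right => s Ss; apply/(uf_notE (uS s Ss)) => sX; apply: H; by exists s.
by move/(uf_notE ua).
Qed.

Definition chain (C : (UF -> Prop) -> Prop) :=
  forall S T, C S -> C T -> (forall s, S s -> T s) \/ (forall s, T s -> S s).

Lemma chain_nonempty C : (exists S, C S) -> chain C ->
  (forall S, C S -> closed S /\ ufset S /\ exists s, S s) ->
  exists a, ultrafilter a /\ forall S, C S -> S a.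
Proof.
move=> [S1 CS1] ch HC.
pose G := fun Z => exists S, C S /\ forall s, S s -> s Z.
have [a [ua aG]] : exists p, ultrafilter p /\ forall X, G X -> p X.
  apply: uf_exists => l lG.
  have [S0 [CS0 h]] : exists S0, C S0 /\ forall Z, List.In Z l -> forall s, S0 s -> s Z.
    elim: l lG => [|Z l IH] lG; first by exists S1; split.
    have [S0 [CS0 h]] := IH (fun X hX => lG X (or_intror hX)).
    have [SZ [CSZ hZ]] := lG Z (or_introl erefl).
    case: (ch _ _ CSZ CS0) => inc.
      exists SZ; split => // Z' [<-|hZ'] s Ss; first exact: hZ.
      exact: h _ hZ' s (inc s Ss).
    exists S0; split => // Z' [<-|hZ'] s Ss; last exact: h.
    exact: hZ s (inc s Ss).
  have [_ [uS0 [s Ss]]] := HC S0 CS0.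
  have := uf_listI (uS0 s Ss) (fun Z hZ => h Z hZ s Ss) => /(uf_ex (uS0 s Ss)) [n hn].
  by exists n.
exists a; split => // S CS.
have [cS [uS _]] := HC S CS.
apply: cS => // X aX; apply: NNPP => H.
have : a (fun n => ~ X n).
  apply: aG; exists S; split => // s Ss; apply/(uf_notE (uS s Ss)) => sX; apply: H; by exists s.
by move/(uf_notE ua).
Qed.

Definition nonemptyS (S : UF -> Prop) := exists s, S s.

Lemma minimal_exists (Q : (UF -> Prop) -> Prop) (S0 : UF -> Prop) :
  closed S0 -> ufset S0 -> nonemptyS S0 -> Q S0 ->
  (forall C, (exists S, C S) -> (forall S, C S -> Q S) -> Q (fun a => forall S, C S -> S a)) ->
  exists M, closed M /\ ufset M /\ nonemptyS M /\ Q M /\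
    forall M', closed M' -> nonemptyS M' -> Q M' -> (forall s, M' s -> M s) ->
      forall s, M s -> M' s.
Proof.
move=> cS0 uS0 nS0 QS0 HQ.
pose P := fun S => closed S /\ ufset S /\ nonemptyS S /\ Q S.
pose T := {S : UF -> Prop | P S}.
pose t0 : T := exist _ S0 (conj cS0 (conj uS0 (conj nS0 QS0))).
pose R := fun a b : T => boolp.asbool (forall s, sval b s -> sval a s).
have [t tmax] : exists t, classical_sets.premaximal R t.
  apply: (classical_sets.ZL_preorder t0).
  - by move=> a; apply/boolp.asboolP.
  - move=> a b c /boolp.asboolP h1 /boolp.asboolP h2; apply/boolp.asboolP => s /h2 /h1 //.
  - move=> Af Atot.
    case: (classic (exists a, Af a)) => [[a0 Aa0]|nA]; last first.
      by exists t0 => a Aa; case: nA; exists a.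
    pose C := fun S => exists a, Af a /\ sval a = S.
    have Cne : exists S, C S by exists (sval a0), a0.
    have CP : forall S, C S -> P S by move=> S [a [_ <-]]; exact: (svalP a).
    have ch : chain C.
      move=> S1 S2 [a [Aa <-]] [b [Ab <-]].
      case: (Atot a b Aa Ab) => /boolp.asboolP h; [right|left] => //.
    have [z [uz hz]] := chain_nonempty Cne ch (fun S CS => let: conj c (conj u (conj n _)) := CP S CS in conj c (conj u n)).
    have PI : P (fun a => forall S, C S -> S a).
      split; [|split; [|split]].
      - move=> a ua H S CS; have [cS _] := CP S CS; apply: cS => // X aX.
        have [s [hs sX]] := H X aX; exists s; split => //; exact: hs.
      - move=> s hs; have [S CS] := Cne; have [_ [uS _]] := CP S CS; exact: uS _ (hs S CS).
      - by exists z.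
      - apply: HQ => // S CS; have [_ [_ [_ q]]] := CP S CS; exact: q.
    exists (exist _ _ PI) => a Aa; apply/boolp.asboolP => s /= hs; apply: hs; by exists a.
case: t tmax => M [cM [uM [nM QM]]] tmax.
exists M; split => //; split => //; split => //; split => // M' cM' nM' QM' sub.
have uM' : ufset M' by move=> s /sub /uM.
have := tmax (exist _ M' (conj cM' (conj uM' (conj nM' QM')))).
by move=> /(_ (boolp.asboolT sub)) /boolp.asboolP.
Qed.

Definition image_add (p : UF) (S : UF -> Prop) : UF -> Prop :=
  fun a => exists s, S s /\ a = uf_add p s.

Lemma image_ufset p S : ultrafilter p -> ufset S -> ufset (image_add p S).
Proof. by move=> up uS a [s [Ss ->]]; apply: uf_add_uf => //; exact: uS. Qed.

Lemma image_closed p S : ultrafilter p -> closed S -> ufset S -> closed (image_add p S).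
Proof.
move=> up cS uS a ua H.
pose Y := fun Z : natset => exists X, a X /\ Z = (fun n => p (shift X n)).
have [s [Ss hs]] : exists s, S s /\ forall Z, Y Z -> s Z.
  apply: compactness => // l lY.
  have [X [aX hX]] : exists X, a X /\ forall Z, List.In Z l -> forall n, p (shift X n) -> Z n.
    elim: l lY => [|Z l IH] lY; first by exists (fun _ => True); split => //; exact: ufT.
    have [X [aX hX]] := IH (fun X hX => lY X (or_intror hX)).
    have [X' [aX' ->]] := lY Z (or_introl erefl).
    exists (fun n => X n /\ X' n); split; first exact: uf_inter.
    move=> Z' [<-|hZ'] n hn.
      by apply: (uf_up up hn) => m [].
    by apply: (hX Z' hZ' n); apply: (uf_up up hn) => m [].
  have [b [[s [Ss ->]] hb]] := H X aX.
  exists s; split => // Z hZ; apply: (uf_up (uS s Ss) hb) => n; exact: hX.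
exists s; split => //; apply: uf_ext => //; first by apply: uf_add_uf => //; exact: uS.
move=> X aX; apply: hs; by exists X.
Qed.

Definition semigroup (S : UF -> Prop) := forall a b, S a -> S b -> S (uf_add a b).

Lemma ellis S : closed S -> ufset S -> nonemptyS S -> semigroup S ->
  exists e, S e /\ uf_add e e = e.
Proof.
move=> cS uS nS sS.
have HQ : forall C, (exists S', C S') -> (forall S', C S' -> (forall s, S' s -> S s) /\ semigroup S') ->
  (forall s, (fun a => forall S', C S' -> S' a) s -> S s) /\ semigroup (fun a => forall S', C S' -> S' a).
  move=> C [S1 CS1] HC; split.
    move=> s hs; exact: (proj1 (HC S1 CS1)) s (hs S1 CS1).
  move=> a b ha hb S' CS'; exact: (proj2 (HC S' CS')) a b (ha S' CS') (hb S' CS').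
have [M [cM [uM [[e Me] [[MS sM] Mmin]]]]] :=
  @minimal_exists (fun M => (forall s, M s -> S s) /\ semigroup M) S cS uS nS (conj (fun s h => h) sS) HQ.
have ue := uM e Me.
have M1 : forall s, M s -> image_add e M s.
  apply: (Mmin).
  - exact: image_closed.
  - by exists (uf_add e e), e.
  - split.
      move=> s [m [Mm ->]]; exact: MS (sM _ _ Me Mm).
    move=> a b [m1 [Mm1 ->]] [m2 [Mm2 ->]].
    exists (uf_add m1 (uf_add e m2)); split; first by apply: (sM) => //; exact: (sM).
    by rewrite uf_assoc //; try apply: uf_add_uf; try apply: uM.
  - by move=> s [m [Mm ->]]; exact: sM.
have [m0 [Mm0 em0]] := M1 e Me.
have M3 : forall s, M s -> (fun s => M s /\ uf_add e s = e) s.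
  apply: (Mmin).
  - move=> a ua H; split.
      apply: cM => // X aX; have [s [[Ms _] sX]] := H X aX; by exists s.
    apply: esym; apply: uf_ext => //; first exact: uf_add_uf.
    move=> X eX; apply: NNPP => nX.
    have : a (fun n => ~ e (shift X n)) by apply/(uf_notE ua).
    move=> /H [s [[Ms es] sX]].
    have : uf_add e s X by rewrite es.
    rewrite /uf_add => h; exact: (proj1 (uf_notE (uM s Ms) _) sX h).
  - by exists m0; split.
  - split; first by move=> s [Ms _]; exact: MS.
    move=> a b [Ma ea] [Mb eb]; split; first exact: sM.
    by rewrite -uf_assoc ?ea ?eb //; apply: uM.
  - by move=> s [].
exists e; split; first exact: MS.
by have [_ ->] := M3 e Me.
Qed.

Lemma nonprinc_ge p b : ultrafilter p -> nonprincipal p -> p (fun n => b <= n).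
Proof.
move=> up np.
have := proj2 (uf_finI up (fun i n => ~ n = i) b)
  (fun i _ => proj2 (uf_notE up _) (np i)).
move=> H; apply: (uf_up up H) => n hn; rewrite leqNgt; apply/negP => nb.
exact: (hn n nb erefl).
Qed.

Section GG.
Variable p : UF.
Hypothesis up : ultrafilter p.
Hypothesis np : nonprincipal p.
Hypothesis ip : uf_eq (uf_add p p) p.

Lemma idem_star A : p A -> p (fun n => A n /\ p (shift A n)).
Proof.
move=> pA; have := proj2 (ip A) pA; rewrite /uf_add => h.
exact: uf_inter.
Qed.

Definition pick (A : natset) b :=
  epsilon (inhabits 0) (fun x => b <= x /\ A x /\ p (shift A x)).

Lemma pick_spec A b : p A -> b <= pick A b /\ A (pick A b) /\ p (shift A (pick A b)).
Proof.
move=> pA; rewrite /pick; apply: (epsilon_spec (inhabits 0) (fun x => b <= x /\ A x /\ p (shift A x))).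
have := uf_inter up (nonprinc_ge b up np) (idem_star pA) => /(uf_ex up) [n [h1 [h2 h3]]].
by exists n.
Qed.

Variable S : natset.
Hypothesis pS : p S.

Fixpoint st (k : nat) : natset * nat :=
  match k with
  | 0 => (S, pick S 0)
  | k'.+1 => let a := st k' in
      ((fun n => a.1 n /\ a.1 (n + a.2)), pick (fun n => a.1 n /\ a.1 (n + a.2)) a.2.+1)
  end.

Definition As k := (st k).1.
Definition xs k := (st k).2.

Lemma As_p k : p (As k) /\ As k (xs k) /\ p (shift (As k) (xs k)).
Proof.
elim: k => [|k [h1 [h2 h3]]].
  by have [_ h] := pick_spec 0 pS; split.
have hA : p (As k.+1) by exact: (uf_inter up h1 h3).
split => //; exact: (proj2 (pick_spec (xs k).+1 hA)).
Qed.

Lemma xs_incr k : xs k < xs k.+1.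
Proof. exact: (proj1 (pick_spec (xs k).+1 (proj1 (As_p k.+1)))). Qed.

Lemma As_S k n : As k.+1 n -> As k n /\ As k (n + xs k).
Proof. by []. Qed.

Lemma As_dec i j n : i <= j -> As j n -> As i n.
Proof.
move=> /subnK <-; elim: (j - i) n => [|d IH] n //.
by rewrite addSn => /As_S [/IH].
Qed.

Lemma FS_As d : forall j (F : seq nat), uniq F -> F <> [::] ->
  (forall i, i \in F -> j <= i < j + d) -> As j (\sum_(i <- F) xs i).
Proof.
elim: d => [|d IH] j F uF nF hF.
  case: F uF nF hF => [//|i F] _ _ /(_ i (mem_head _ _)).
  by rewrite addn0 => /andP [h1 h2]; move: (leq_trans h2 h1); rewrite ltnn.
case jF: (j \in F).
  have pF := perm_to_rem jF.
  have -> : \sum_(i <- F) xs i = xs j + \sum_(i <- rem j F) xs i.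
    by rewrite (perm_big _ pF) big_cons.
  have uF' : uniq (rem j F) by exact: rem_uniq.
  case F'0: (rem j F) => [|i0 F'].
    by rewrite big_nil addn0; exact: (proj1 (proj2 (As_p j))).
  rewrite -F'0.
  have : As j.+1 (\sum_(i <- rem j F) xs i).
    apply: IH => //; first by rewrite F'0.
    move=> i; rewrite (mem_rem_uniq _ uF) inE => /andP [ij iF].
    have := hF i iF; rewrite addSnnS => /andP [h1 h2]; rewrite h2 andbT.
    by rewrite ltn_neqAle eq_sym ij h1.
  by move=> /As_S [_]; rewrite addnC.
apply: (As_dec (leqnSn j)); apply: IH => // i iF.
have := hF i iF; rewrite addSnnS => /andP [h1 h2]; rewrite h2 andbT.
rewrite ltn_neqAle h1 andbT; apply/eqP => ji; by rewrite ji iF in jF.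
Qed.

Lemma mem_le_sum (F : seq nat) i : i \in F -> i <= \sum_(k <- F) k.
Proof.
elim: F => [//|a F IH]; rewrite in_cons big_cons => /orP [/eqP ->|/IH h].
  exact: leq_addr.
exact: leq_trans h (leq_addl _ _).
Qed.

Lemma GG_IP : IP_set S.
Proof.
exists xs; split; first exact: xs_incr.
move=> F uF nF.
have := @FS_As (\sum_(k <- F) k).+1 0 F uF nF.
move=> H; apply: H => i iF; rewrite leq0n add0n ltnS; exact: mem_le_sum.
Qed.

End GG.

Lemma central_IP S : central S -> IP_set S.
Proof.
move=> [p [[[up [np ip]] _] pS]]; exact: (GG_IP up np ip pS).
Qed.

Lemma mem_le_sumf (F : seq nat) (f : nat -> nat) i : i \in F -> f i <= \sum_(k <- F) f k.
Proof.
elim: F => [//|a F IH]; rewrite in_cons big_cons => /orP [/eqP ->|/IH h].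
  exact: leq_addr.
exact: leq_trans h (leq_addl _ _).
Qed.

Section IPsec.
Variable x : nat -> nat.
Hypothesis xinc : forall n, x n < x n.+1.

Lemma x_ge i : i <= x i.
Proof. elim: i => [//|i IH]; exact: leq_ltn_trans IH (xinc i). Qed.

Definition FSm m : natset := fun n => exists F : seq nat, uniq F /\ F <> [::] /\
  (forall i, i \in F -> m <= i) /\ n = \sum_(i <- F) x i.

Lemma FSm_mono m m' n : m <= m' -> FSm m' n -> FSm m n.
Proof.
move=> mm' [F [uF [nF [hF ->]]]]; exists F; do 3 split => //.
move=> i /hF; exact: leq_trans mm'.
Qed.

Lemma FSm_x m : FSm m (x m).
Proof. exists [:: m]; do 3 split => //; last by rewrite big_seq1. by move=> i; rewrite inE => /eqP ->. Qed.

Lemma FSm_add m n n' : FSm m n -> FSm n.+1 n' -> FSm m (n' + n).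
Proof.
move=> [F [uF [nF [hF ->]]]] [G [uG [nG [hG ->]]]].
have Fle : forall i, i \in F -> i <= \sum_(k <- F) x k.
  move=> i iF; exact: leq_trans (x_ge i) (mem_le_sumf x iF).
exists (G ++ F); split; last split; last split.
- rewrite cat_uniq uG uF andbT /=; apply/hasPn => i iF; apply/negP => iG.
  by have := hG i iG; rewrite ltnNge Fle.
- by destruct G.
- move=> i; rewrite mem_cat => /orP [/hG h|/hF //].
  have [j jF] : exists j, j \in F by destruct F as [|j F']; [done | exists j; exact: mem_head].
  exact: leq_trans (hF j jF) (leq_trans (Fle j jF) (ltnW h)).
- by rewrite big_cat.
Qed.

Definition Gam : UF -> Prop := fun a => ultrafilter a /\ forall m, a (FSm m).

Lemma Gam_closed : closed Gam.
Proof.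
move=> a ua H; split => // m; apply: NNPP => nm.
have := proj2 (uf_notE ua _) nm => /H [s [[us hs] sX]].
exact: (proj1 (uf_notE us _) sX (hs m)).
Qed.

Lemma Gam_ufset : ufset Gam.
Proof. by move=> s []. Qed.

Lemma Gam_nonempty : nonemptyS Gam.
Proof.
suff [a [ua ha]] : exists p, ultrafilter p /\ forall X, (fun Z => exists m, Z = FSm m) X -> p X.
  by exists a; split => // m; apply: ha; exists m.
apply: uf_exists => l hl.
have [M hM] : exists M, forall Z, List.In Z l -> forall n, FSm M n -> Z n.
  elim: l hl => [|Z l IH] hl; first by exists 0.
  have [M hM] := IH (fun X hX => hl X (or_intror hX)).
  have [m ->] := hl Z (or_introl erefl).
  exists (maxn M m) => Z' [<-|hZ'] n hn.
    apply: FSm_mono hn; exact: leq_maxr.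
  apply: (hM Z' hZ'); apply: FSm_mono hn; exact: leq_maxl.
exists (x M) => Z hZ; apply: hM hZ _ (FSm_x M).
Qed.

Lemma Gam_semigroup : semigroup Gam.
Proof.
move=> a b [ua ha] [ub hb]; split; first exact: uf_add_uf.
move=> m; rewrite /uf_add; apply: (uf_up ub (hb m)) => n hn.
apply: (uf_up ua (ha n.+1)) => k hk; rewrite /shift; exact: FSm_add.
Qed.

Lemma Gam_nonprinc a : Gam a -> nonprincipal a.
Proof.
move=> [ua ha] k hk.
have := uf_inter ua hk (ha k.+1) => /(uf_ex ua) [n [nk [F [_ [nF [hF nF']]]]]].
case: F nF hF nF' => [//|j F] _ /(_ j (mem_head _ _)) h nF'.
have := leq_trans h (leq_trans (x_ge j) (mem_le_sumf x (mem_head j F))).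
by rewrite -nF' nk ltnn.
Qed.

Lemma IP_idem (S : natset) : (forall F : seq nat, uniq F -> F <> [::] -> S (\sum_(i <- F) x i)) ->
  exists p, ultrafilter p /\ nonprincipal p /\ uf_add p p = p /\ p S.
Proof.
move=> hS.
have [e [Ge ee]] := ellis Gam_closed Gam_ufset Gam_nonempty Gam_semigroup.
exists e; split; first exact: (proj1 Ge).
split; first exact: Gam_nonprinc.
split => //; apply: (uf_up (proj1 Ge) (proj2 Ge 0)) => n [F [uF [nF [_ ->]]]]; exact: hS.
Qed.

End IPsec.

Section Dyn.
Variable (A : finType) (omega : nat -> A).
Hypothesis hur : uniformly_recurrent omega.

Lemma find_t p r : ultrafilter p -> ultrafilter r ->
  exists t, ultrafilter t /\ act t (act r (act p omega)) = act p omega.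
Proof.
move=> up ur.
set y := act p omega; set z := act r y.
pose B := fun k n => forall j, j < k -> z (n + j) = y j.
have HB : forall k, exists n, B k n.
  move=> k.
  have [n0 hn0] := act_window omega 0 k up.
  pose w := mkseq y k.
  have fw : factor omega w.
    exists n0 => i; rewrite size_mkseq => ik.
    by rewrite nth_mkseq // -hn0.
  have [L hL] := hur fw.
  have [a ha] := act_window y 0 (L + k) ur.
  have [b hb] := act_window omega a (L + k) up.
  have [n [/andP [bn nbL] occn]] := hL b.
  exists (n - b) => j jk.
  have djL : n - b + j < L + k by lia.
  have := ha _ djL; rewrite add0n /z => ->.
  rewrite /y (hb _ djL).
  have -> : b + (n - b + j) = n + j by lia.
  have jw : j < size w by rewrite size_mkseq.
  by rewrite (occn j jw) nth_mkseq.
have [t [ut ht]] : exists t, ultrafilter t /\ forall X, (fun Z => exists k, Z = B k) X -> t X.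
  apply: uf_exists => l hl.
  have [K hK] : exists K, forall Z, List.In Z l -> forall n, B K n -> Z n.
    elim: l hl => [|Z l IH] hl; first by exists 0.
    have [K hK] := IH (fun X hX => hl X (or_intror hX)).
    have [k ->] := hl Z (or_introl erefl).
    exists (maxn K k) => Z' [<-|hZ'] n hn.
      move=> j jk; apply: hn; exact: leq_trans jk (leq_maxr _ _).
    apply: (hK Z' hZ') => j jk; apply: hn; exact: leq_trans jk (leq_maxl _ _).
  have [n hn] := HB K; exists n => Z hZ; exact: hK.
exists t; split => //; apply: functional_extensionality => i.
apply/(actE _ _ _ ut); apply: (uf_up ut (ht (B i.+1) (ex_intro _ i.+1 erefl))).
by move=> n /(_ i (ltnSn i)).
Qed.

Definition ufs : UF -> Prop := fun s => ultrafilter s.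

Lemma ufs_closed : closed ufs.
Proof. by move=> a ua _. Qed.

Lemma main_central (u : seq A) p : ultrafilter p -> nonprincipal p -> uf_add p p = p ->
  p (occ omega u) -> central (occ omega u).
Proof.
move=> up np pp pocc.
set y := act p omega.
have yfix : act p y = y by rewrite /y -act_add // pp.
pose I0 := image_add p ufs.
pose Q := fun M => (forall s, M s -> I0 s) /\ (forall r s, M r -> ultrafilter s -> M (uf_add r s)).
have cI0 : closed I0 by apply: image_closed => //; exact: ufs_closed.
have uI0 : ufset I0 by apply: image_ufset.
have nI0 : nonemptyS I0 by exists (uf_add p p), p.
have QI0 : Q I0.
  split => // r s [s' [us' ->]] us; exists (uf_add s' s); split; first exact: uf_add_uf.
  by rewrite uf_assoc.
have HQ : forall C, (exists S, C S) -> (forall S, C S -> Q S) -> Q (fun a => forall S, C S -> S a).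
  move=> C [S1 CS1] HC; split.
    move=> s hs; exact: (proj1 (HC S1 CS1)) s (hs S1 CS1).
  move=> r s hr us S' CS'; exact: (proj2 (HC S' CS')) r s (hr S' CS') us.
have [M [cM [uM [[r Mr] [[MI0 Mid] Mmin]]]]] := minimal_exists cI0 uI0 nI0 QI0 HQ.
have Mgen : forall r, M r -> forall s, M s -> exists t, ultrafilter t /\ s = uf_add r t.
  move=> r0 Mr0; have ur0 := uM r0 Mr0.
  have : forall s, M s -> image_add r0 ufs s.
    apply: (Mmin).
    - apply: image_closed => //; exact: ufs_closed.
    - by exists (uf_add r0 r0), r0.
    - split.
        move=> s [t [ut ->]]; apply: MI0; exact: Mid.
      move=> a s [t [ut ->]] us; exists (uf_add t s); split; first exact: uf_add_uf.
      by rewrite uf_assoc.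
    - move=> s [t [ut ->]]; exact: Mid.
  by move=> H s /H [t [ut ->]]; exists t.
have ur := uM r Mr.
have [t [ut ht]] := find_t up ur.
pose E := fun s => M s /\ act s y = y.
have cE : closed E.
  move=> a ua H; split.
    apply: cM => // X aX; have [s [[Ms _] sX]] := H X aX; by exists s.
  apply: functional_extensionality => i; apply/(actE _ _ _ ua).
  apply: NNPP => nX; have := proj2 (uf_notE ua _) nX => /H [s [[Ms es] sX]].
  apply: (proj1 (uf_notE (uM s Ms) _) sX); have := actP y i (uM s Ms); by rewrite es.
have uE : ufset E by move=> s [/uM].
have nE : nonemptyS E.
  exists (uf_add r t); split; first exact: Mid.
  by rewrite act_add.
have sE : semigroup E.
  move=> a b [Ma ea] [Mb eb]; split; first by apply: Mid => //; exact: uM.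
  by rewrite act_add ?ea ?eb //; apply: uM.
have [q [[Mq eq] qq]] := ellis cE uE nE sE.
have uq := uM q Mq.
have [s' [us' qE]] := MI0 q Mq.
have actq : act q omega = y.
  move: eq; rewrite qE !act_add // yfix => h.
  by rewrite -/y.
exists q; split; last first.
  apply/(occ_uf _ _ uq) => i iu; rewrite actq.
  by have := proj1 (occ_uf _ _ up) pocc i iu.
split.
  split => //; split; last by rewrite qq.
  move=> k; rewrite qE /uf_add => h.
  have := uf_ex us' h => [[n hn]].
  apply: (np (k - n)); apply: (uf_up up hn) => m; rewrite /shift => <-.
  by rewrite addnK.
split => // I [[i [ui Ii]] [Iuf Icl]].
have Iqi := proj2 (Icl i q Ii uq).
have Mqi : M (uf_add q i) by exact: Mid.
have [w [uw ->]] := Mgen _ Mqi q Mq.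
exact: (proj1 (Icl _ w Iqi uw)).
Qed.

End Dyn.

Theorem theorem3 (A : finType) (omega : nat -> A) (u : seq A) :
  0 < #|A| -> uniformly_recurrent omega -> u <> [::] ->
  (IP_set (occ omega u) <-> central (occ omega u)).
Proof.
move=> _ hur _; split; last exact: central_IP.
move=> [x [xinc hx]].
have [p [up [np [pp pS]]]] := IP_idem xinc hx.
exact: (main_central hur up np pp pS).
Qed.
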